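(* Let $n\in\mathbb N$, let $J$ be an arbitrary $n$-field function and let $K_1,\dots,K_n$ be kernel functions satisfying (PM$_c$) for some $c>0$. Let $\mathbf y\in Y$. For each $j\in\{0,1,\dots,n\}$ let $t_{*j},t^*_j\in\operatorname{rint}I_j(\mathbf y)$ be arbitrary points with $t_{*j}\le t^*_j$. For each $j\in\{0,\dots,n\}$ and $r\in\{1,\dots,n\}$ let $$\mu_{jr}\in\bigl[D_-K_r(t^*_j-y_r),\,D_-K_r(t_{*j}-y_r)\bigr]$$ be arbitrary. Define the $n\times n$ matrix $A=[a_{jr}]_{j,r=1}^n$ by $a_{jr}:=\mu_{jr}-\mu_{(j-1)r}$. Then $$a_{rr}-\sum_{j=1,\,j\ne r}^n|a_{jr}|\ge c\qquad(r=1,\dots,n).$$ In particular, $A$ is invertible.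
   Context: A kernel function is a function $K:(-1,0)\cup(0,1)\to\mathbb R$ that is concave on $(-1,0)$ and concave on $(0,1)$ and satisfies $\lim_{t\downarrow0}K(t)=\lim_{t\uparrow0}K(t)$. It is extended to $[-1,1]$ by its one-sided limits. For $c\ge0$, a kernel function satisfies (PM$_c$) if $K'(t)-K'(t-1)\ge c$ for almost every $t\in(0,1)$. $D_-K$ denotes the left derivative. An $n$-field function is a function $J:[0,1]\to[-\infty,\infty)$ that is bounded above and whose set of finite values has total weight strictly greater than $n$. Here the points $0$ and $1$ each have weight $1/2$ and every point of $(0,1)$ has weight $1$. $S=\{\mathbf y\in\mathbb R^n:0<y_1<\dots<y_n<1\}$. Set $y_0:=0$ and $y_{n+1}:=1$. Let $I_j(\mathbf y)=[y_j,y_{j+1}]$ and $m_j(\mathbf y)=\sup_{t\in I_j(\mathbf y)}\bigl(J(t)+\sum_iK_i(t-y_i)\bigr)$. $Y=\{\mathbf y\in S:m_j(\mathbf y)\neq-\infty\ \forall j\}$. $\operatorname{rint}$ denotes the interior relative to $[0,1]$; thus $\operatorname{rint}I_0=[0,y_1)$, $\operatorname{rint}I_n=(y_n,1]$, and $\operatorname{rint}I_j=(y_j,y_{j+1})$ otherwise. *)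

(* Defs.v *)
From HB Require Import structures.
From mathcomp Require Import all_boot all_order all_algebra.
From mathcomp Require Import all_classical all_reals all_analysis.
Set Implicit Arguments. Unset Strict Implicit. Unset Printing Implicit Defensive.
Import Order.TTheory GRing.Theory Num.Theory.
Import numFieldNormedType.Exports.
Local Open Scope classical_set_scope.
Local Open Scope ring_scope.

Section Defs.
Variable R : realType.

Definition concave_on (f : R -> R) (a b : R) : Prop :=
  forall x y l : R, a < x < b -> a < y < b -> 0 <= l <= 1 ->
    l * f x + (1 - l) * f y <= f (l * x + (1 - l) * y).

(* Kernel function: K is (the real-valued function) given on (-1,0) u (0,1);
   concave on each piece, with equal one-sided limits at 0 (in [-oo,+oo]). *)
Definition kernel_function (K : R -> R) : Prop :=
  concave_on K (-1) 0 /\ concave_on K 0 1 /\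
  exists L : \bar R,
    ((fun t => (K t)%:E) @ 0^'+ --> L) /\ ((fun t => (K t)%:E) @ 0^'- --> L).

Definition kext (K : R -> R) (x : R) : \bar R :=
  if x == 0 then lim ((fun t => (K t)%:E) @ 0^'+) else (K x)%:E.

Definition PM (c : R) (K : R -> R) : Prop :=
  (@lebesgue_measure R).-negligible
    [set t : R | 0 < t < 1 /\
       ~ [/\ derivable K t 1, derivable K (t - 1) 1 &
             c <= derive1 K t - derive1 K (t - 1)]].

Definition leftD (K : R -> R) (x : R) : R :=
  lim ((fun s => (K x - K s) / (x - s)) @ x^'-).

Definition pweight (t : R) : \bar R :=
  if (t == 0) || (t == 1) then (2^-1)%:E else 1%E.

Definition n_field (n : nat) (J : R -> \bar R) : Prop :=
  (exists M : R, forall t, 0 <= t <= 1 -> (J t <= M%:E)%E) /\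
  ((n%:R)%:E < \esum_(t in [set t : R | (0 <= t <= 1)%R /\ J t \is a fin_num])
                  pweight t)%E.

(* y_j for j = 0..n+1, with y_0 := 0 and y_{n+1} := 1; the vector y is
   given by y 1, ..., y n. *)
Definition ypt (n : nat) (y : nat -> R) (j : nat) : R :=
  if j == 0%N then 0 else if (j <= n)%N then y j else 1.

Definition inS (n : nat) (y : nat -> R) : Prop :=
  forall j, (j <= n)%N -> ypt n y j < ypt n y j.+1.

Definition mj (n : nat) (J : R -> \bar R) (K : nat -> R -> R) (y : nat -> R)
  (j : nat) : \bar R :=
  ereal_sup [set (J t + \sum_(1 <= i < n.+1) kext (K i) (t - y i))%E
            | t in `[ypt n y j, ypt n y j.+1]].

Definition inY (n : nat) (J : R -> \bar R) (K : nat -> R -> R) (y : nat -> R)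
  : Prop :=
  inS n y /\ forall j, (j <= n)%N -> mj n J K y j != -oo%E.

(* t in rint I_j(y), interior relative to [0,1] *)
Definition in_rint (n : nat) (y : nat -> R) (j : nat) (t : R) : Prop :=
  (if j == 0%N then 0 <= t else ypt n y j < t) /\
  (if j == n then t <= 1 else t < ypt n y j.+1).

End Defs.

(* Main.v *)
Require Import Defs.
From HB Require Import structures.
From mathcomp Require Import all_boot all_order all_algebra.
From mathcomp Require Import all_classical all_reals all_analysis.
From mathcomp Require Import ring lra zify.
Import Order.TTheory GRing.Theory Num.Theory.
Import numFieldNormedType.Exports.
Local Open Scope classical_set_scope.
Local Open Scope ring_scope.
Set Implicit Arguments. Unset Strict Implicit.

Section An.
Variable R : realType.
Implicit Types (f : R -> R) (a b : R).

Definition slope f p q := (f q - f p) / (q - p).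

Lemma chord_cross f a b p q w : concave_on f a b -> a < p -> p < q -> q < w -> w < b ->
  (f q - f p) * (w - q) >= (f w - f q) * (q - p).
Proof.
move=> cf ap pq qw wb.
have wp : 0 < w - p by lra.
set l := (w - q) / (w - p).
have l01 : 0 <= l <= 1.
  apply/andP; split; first by rewrite divr_ge0 //; lra.
  by rewrite ler_pdivrMr // mul1r; lra.
have eq : l * p + (1 - l) * w = q.
  rewrite /l; field; lra.
have := cf p w l; rewrite eq.
have H1 : a < p < b by apply/andP; split; lra.
have H2 : a < w < b by apply/andP; split; lra.
move=> /(_ H1 H2 l01) h.
have h2 : (w - p) * (l * f p + (1 - l) * f w) <= (w - p) * f q.
  by rewrite ler_wpM2l //; lra.
have e2 : (w - p) * (l * f p + (1 - l) * f w) = (w - q) * f p + (q - p) * f w.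
  rewrite /l; field; lra.
rewrite e2 in h2; nra.
Qed.

Lemma slope_cross f p q x y : p < q -> x < y ->
  (slope f x y <= slope f p q) = ((f y - f x) * (q - p) <= (f q - f p) * (y - x)).
Proof.
move=> pq xy; rewrite /slope ler_pdivrMr ?subr_gt0 // mulrAC ler_pdivlMr ?subr_gt0 //.
Qed.

Lemma ch1 f a b p q w : concave_on f a b -> a < p -> p < q -> q < w -> w < b ->
  slope f q w <= slope f p q.
Proof.
move=> cf ap pq qw wb; rewrite slope_cross //; have := chord_cross cf ap pq qw wb; nra.
Qed.

Lemma ch2 f a b p q w : concave_on f a b -> a < p -> p < q -> q < w -> w < b ->
  slope f p w <= slope f p q.
Proof.
move=> cf ap pq qw wb; rewrite slope_cross //; last by lra.
have := chord_cross cf ap pq qw wb; nra.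
Qed.

Lemma ch3 f a b p q w : concave_on f a b -> a < p -> p < q -> q < w -> w < b ->
  slope f q w <= slope f p w.
Proof.
move=> cf ap pq qw wb; rewrite slope_cross //; last by lra.
have := chord_cross cf ap pq qw wb; nra.
Qed.


Lemma leftD_cvg f a b x : concave_on f a b -> a < x -> x < b ->
  cvg ((fun s => (f x - f s) / (x - s)) @ x^'-).
Proof.
move=> cf ax xb.
rewrite -is_cvgNE; apply: nondecreasing_at_left_is_cvgr.
- near=> z => u v; rewrite !in_itv/= => /andP[zu ux] /andP[zv vx] uv.
  rewrite /= lerN2.
  have [->|uv'] := eqVneq u v; first by [].
  have ltuv : u < v by rewrite lt_neqAle uv' uv.
  have az : a < z by near: z; exact: nbhs_left_gt.
  apply: (ch3 cf) => //; lra.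
- near=> z; exists (- slope f x ((x + b) / 2)) => w [y] /=; rewrite in_itv/= => /andP[zy yx] <-.
  rewrite lerN2.
  have az : a < z by near: z; exact: nbhs_left_gt.
  apply: (ch1 cf) => //; lra.
Unshelve. all: by end_near. Qed.


Lemma leftD_ge f a b x q : concave_on f a b -> a < x -> x < q -> q < b ->
  slope f x q <= leftD f x.
Proof.
move=> cf ax xq qb; rewrite /leftD; apply: limr_ge.
  by apply: (leftD_cvg cf) => //; lra.
near=> s.
have as' : a < s by near: s; exact: nbhs_left_gt.
have sx : s < x by near: s; exact: nbhs_left_lt.
exact: (ch1 cf).
Unshelve. all: by end_near. Qed.

Lemma leftD_le f a b s x : concave_on f a b -> a < s -> s < x -> x < b ->
  leftD f x <= slope f s x.
Proof.
move=> cf as' sx xb; rewrite /leftD; apply: limr_le.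
  by apply: (leftD_cvg cf) => //; lra.
near=> w.
have sw : s < w by near: w; exact: nbhs_left_gt.
have wx : w < x by near: w; exact: nbhs_left_lt.
exact: (ch3 cf).
Unshelve. all: by end_near. Qed.

Lemma der_le f a b s t : concave_on f a b -> a < s -> s < t -> t < b ->
  derivable f t 1 -> derive1 f t <= slope f s t.
Proof.
move=> cf as' st tb D.
have DL := cvg_dnbhs_at_left D.
rewrite derive1E /derive -(cvg_lim _ DL) //.
apply: limr_le; first exact: cvgP DL.
near=> h.
have h0 : h < 0 by near: h; exact: nbhs_left_lt.
have hs : s - t < h by near: h; apply: nbhs_left_gt; lra.
change (h^-1 * (f (h * 1 + t) - f t) <= slope f s t).
have -> : h^-1 * (f (h * 1 + t) - f t) = slope f (h + t) t.
  rewrite /slope mulr1; have hn : h != 0 by rewrite lt_eqF.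
  have -> : t - (h + t) = - h by ring.
  by field.
apply: (ch3 cf) => //; lra.
Unshelve. all: by end_near. Qed.


Lemma der_ge f a b t q : concave_on f a b -> a < t -> t < q -> q < b ->
  derivable f t 1 -> slope f t q <= derive1 f t.
Proof.
move=> cf at' tq qb D.
have DL := cvg_dnbhs_at_right D.
rewrite derive1E /derive -(cvg_lim _ DL) //.
apply: limr_ge; first exact: cvgP DL.
near=> h.
have h0 : 0 < h by near: h; exact: nbhs_right_gt.
have hs : h < q - t by near: h; apply: nbhs_right_lt; lra.
change (slope f t q <= h^-1 * (f (h * 1 + t) - f t)).
have -> : h^-1 * (f (h * 1 + t) - f t) = slope f t (h + t).
  rewrite /slope mulr1; have hn : h != 0 by rewrite gt_eqF.
  have -> : h + t - t = h by ring.
  by field.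
apply: (ch2 cf) => //; lra.
Unshelve. all: by end_near. Qed.


Lemma good_point f c lo hi : PM c f -> 0 <= lo -> lo < hi -> hi <= 1 ->
  exists t', lo < t' < hi /\ [/\ derivable f t' 1, derivable f (t' - 1) 1 &
    c <= derive1 f t' - derive1 f (t' - 1)].
Proof.
move=> [B [mB B0 sub]] l0 lh h1.
have [//|nex] := pselect (exists t', lo < t' < hi /\ [/\ derivable f t' 1, derivable f (t' - 1) 1 &
    c <= derive1 f t' - derive1 f (t' - 1)]).
have sI : [set` `]lo, hi[] `<=` B.
  move=> x /=; rewrite in_itv /= => /andP[lx xh]; apply: sub; split.
    by apply/andP; split; lra.
  by move=> H; apply: nex; exists x; split => //; apply/andP; split.
have := @le_measure _ _ _ (@lebesgue_measure R) _ _ _ _ sI.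
rewrite !inE => /(_ (measurable_itv _) mB) H.
have : (lebesgue_measure [set` `]lo, hi[] <= 0)%E by apply: (le_trans H); rewrite le_eqVlt; apply/orP; left; apply/eqP; exact: B0.
rewrite lebesgue_measure_itv /= lte_fin lh -EFinD lee_fin => H2.
exfalso; clear -lh H2; lra.
Qed.


Lemma slopeK f p q : p < q -> slope f p q * (q - p) = f q - f p.
Proof. by move=> pq; rewrite /slope divfK // subr_eq0 gt_eqF. Qed.

Lemma approx_s f t e : concave_on f 0 1 -> 0 < t -> t < 1 -> 0 < e ->
  exists s, 0 < s < t /\ slope f s t <= leftD f t + e.
Proof.
move=> cf t0 t1 e0.
have cv := leftD_cvg cf t0 t1.
have H : \forall s \near t^'-, (f t - f s) / (t - s) <= leftD f t + e.
  by apply: cvgr_le; [exact: cv | rewrite /leftD ltrDl].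
near (t^'-) => s.
exists s; split; last by near: s.
apply/andP; split; near: s; [exact: nbhs_left_gt | exact: nbhs_left_lt].
Unshelve. all: by end_near. Qed.


Lemma keyD f c t u : concave_on f (-1) 0 -> concave_on f 0 1 -> PM c f ->
  0 < t -> t < 1 -> -1 < u -> u < 0 -> t <= u + 1 ->
  c <= leftD f t - leftD f u.
Proof.
move=> cfn cfp pm t0 t1 u1 u0 tu.
apply/ler_addgt0Pr => e e0.
have e20 : 0 < e / 2 by rewrite divr_gt0.
have [s [/andP[s0 st] hs]] := approx_s cfp t0 t1 e20.
set L := t - s.
have hL : L = t - s by [].
have L0 : 0 < L by lra.
set v := (t + 1) / 2.
set m := slope f t v.
set sg := slope f s t - m.
have sg0 : 0 <= sg.
  rewrite /sg subr_ge0 /m; apply: (ch1 cfp) => //; rewrite /v; lra.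
set del := e * L / (4 * (sg + e)).
have den0 : 0 < 4 * (sg + e) by apply: mulr_gt0 => //; lra.
have del0 : 0 < del by rewrite /del divr_gt0 // mulr_gt0.
have delL : del <= L / 4.
  rewrite /del ler_pdivrMr // mulrAC ler_pdivlMr //; nra.
have delsg : sg * del <= e * L / 4.
  rewrite /del mulrA ler_pdivrMr // mulrAC ler_pdivlMr //; nra.
have g1 : 0 <= t - del by lra.
have g2 : t - del < t by lra.
have [t' [/andP[lt' t't] [d1 d2 dc]]] := good_point pm g1 g2 (ltW t1).
have st' : s < t' by lra.
have h1 : derive1 f t' <= slope f s t' := der_le cfp s0 st' (lt_trans t't t1) d1.
have h3 : m <= slope f t' t by apply: (ch1 cfp) => //; try lra; rewrite /v; lra.
have h2 : slope f s t' <= slope f s t + e / 2.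
  have K1 := slopeK f st'.
  have K2 := slopeK f t't.
  have K3 := slopeK f st.
  rewrite -(@ler_pM2r _ (t' - s)); last by lra.
  rewrite K1.
  have hh : sg * (t - t') <= sg * del by rewrite ler_wpM2l //; lra.
  have hm : m * (t - t') <= slope f t' t * (t - t') by rewrite ler_wpM2r //; lra.
  have he : e * L / 4 <= e / 2 * (t' - s).
    have : L / 2 <= t' - s by lra.
    nra.
  rewrite /sg hL in hh delsg he.
  nra.
have h4 : leftD f u <= slope f (t' - 1) u by apply: (leftD_le cfn); lra.
have h5 : slope f (t' - 1) u <= derive1 f (t' - 1) by apply: (der_ge cfn _ _ _ d2); lra.
lra.
Qed.


Lemma leftD_mono f a b p q : concave_on f a b -> a < p -> p < q -> q < b ->
  leftD f q <= leftD f p.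
Proof.
move=> cf ap pq qb.
apply: (le_trans (leftD_le cf ap pq qb)).
exact: (leftD_ge cf).
Qed.

Lemma ypt_lt n (y : nat -> R) : inS n y -> forall i j, (i < j)%N -> (j <= n.+1)%N ->
  ypt n y i < ypt n y j.
Proof.
move=> hS i j; elim: j => [//|j IH] ij jn.
rewrite ltnS leq_eqVlt in ij; case/orP: ij => [/eqP ->|ij]; first exact: hS.
exact: (lt_trans (IH ij (ltnW jn)) (hS j jn)).
Qed.

Lemma ypt_le n (y : nat -> R) : inS n y -> forall i j, (i <= j)%N -> (j <= n.+1)%N ->
  ypt n y i <= ypt n y j.
Proof.
move=> hS i j; rewrite leq_eqVlt => /orP[/eqP -> //|ij] jn.
exact/ltW/ypt_lt.
Qed.

Lemma ypt0 n (y : nat -> R) : ypt n y 0 = 0. Proof. by []. Qed.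
Lemma yptn n (y : nat -> R) : ypt n y n.+1 = 1.
Proof. by rewrite /ypt /= ltnn. Qed.
Lemma yptr n (y : nat -> R) r : (1 <= r <= n)%N -> ypt n y r = y r.
Proof. by case: r => [//|r] /andP[_ rn]; rewrite /ypt /= rn. Qed.

Lemma rint_lo n (y : nat -> R) j t : in_rint n y j t ->
  ypt n y j <= t /\ ((0 < j)%N -> ypt n y j < t).
Proof.
case: j => [|j] [h _]; first by split.
by split => [|_ //]; apply: ltW.
Qed.

Lemma rint_hi n (y : nat -> R) j t : (j <= n)%N -> in_rint n y j t ->
  t <= ypt n y j.+1 /\ ((j < n)%N -> t < ypt n y j.+1).
Proof.
move=> jn [_ h]; case: (eqVneq j n) h => [-> h|jn' h].
  by rewrite yptn; split => //; rewrite ltnn.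
by split => [|_ //]; apply: ltW.
Qed.

End An.
Lemma diagdom (R : realFieldType) n (M : 'M[R]_n) (c : R) : 0 < c ->
  (forall r, c <= M r r - \sum_(j | j != r) `|M j r|) -> M \in unitmx.
Proof.
move=> c0 H; rewrite unitmxE unitfE; apply/negP => /det0P [v vn0 vM0].
case: n M v vn0 vM0 H => [|n] M v vn0 vM0 H.
  by move: vn0; rewrite (_ : v = 0) ?eqxx // ; apply/rowP => -[].
case: (@arg_maxP _ _ 'I_n.+1 ord0 xpredT (fun i => `|v 0 i|) isT) => r _ rmax.
have hr := H r.
have e : \sum_j v 0 j * M j r = 0.
  by have := congr1 (fun A : 'M[R]_(1, n.+1) => A 0 r) vM0; rewrite !mxE.
rewrite (bigD1 r) //= in e.
have e2 : v 0 r * M r r = - \sum_(j | j != r) v 0 j * M j r.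
  by apply/eqP; rewrite -subr_eq0 opprK e.
have h1 : `|v 0 r| * M r r <= `|v 0 r| * \sum_(j | j != r) `|M j r|.
  apply: (le_trans (y := `|v 0 r * M r r|)).
    by rewrite normrM ler_wpM2l // real_ler_norm // num_real.
  rewrite e2 normrN mulr_sumr; apply: (le_trans (ler_norm_sum _ _ _)).
  apply: ler_sum => j _; rewrite normrM mulrC [X in _ <= X]mulrC.
  by apply: ler_wpM2l => //; apply: rmax.
have vr0 : `|v 0 r| = 0.
  apply/eqP; rewrite eq_le normr_ge0 andbT.
  have : `|v 0 r| * c <= 0.
    apply: (le_trans (y := `|v 0 r| * (M r r - \sum_(j | j != r) `|M j r|))).
      by rewrite ler_wpM2l.
    by rewrite mulrBr subr_le0.
  move=> h; rewrite leNgt; apply/negP => p; by have := mulr_gt0 p c0; rewrite ltNge h.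
move/negP: vn0; apply; apply/eqP/rowP => j; rewrite mxE.
apply/eqP; rewrite -normr_eq0 eq_le normr_ge0 andbT -vr0; exact: rmax.
Qed.

Unset Implicit Arguments.
Local Close Scope classical_set_scope.
Theorem lemma6p4 (R : realType) (n : nat) (J : R -> \bar R)
  (K : nat -> R -> R) (c : R) (y : nat -> R)
  (tlo thi : nat -> R) (mu : nat -> nat -> R) :
  0 < c ->
  n_field n J ->
  (forall r, (1 <= r <= n)%N -> kernel_function (K r) /\ PM c (K r)) ->
  inY n J K y ->
  (forall j, (j <= n)%N ->
     [/\ in_rint n y j (tlo j), in_rint n y j (thi j) & tlo j <= thi j]) ->
  (forall j r, (j <= n)%N -> (1 <= r <= n)%N ->
     leftD (K r) (thi j - y r) <= mu j r <= leftD (K r) (tlo j - y r)) ->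
  let a := fun j r : nat => mu j r - mu j.-1 r in
  (forall r, (1 <= r <= n)%N ->
     c <= a r r - \sum_(1 <= j < n.+1 | j != r) `|a j r|) /\
  (\matrix_(j < n, r < n) a j.+1 r.+1) \in unitmx.
Proof.
move=> c0 _ HK [HS _] Ht Hmu a.
have key : forall r, (1 <= r <= n)%N ->
    c <= a r r - \sum_(1 <= j < n.+1 | j != r) `|a j r|.
  move=> r rr; have /andP[r1 rn] := rr.
  have [[cfn [cfp _]] pm] := HK r rr.
  have yr : y r = ypt n y r by rewrite yptr.
  have yr0 : 0 < y r by rewrite yr -(ypt0 n y); apply: ypt_lt => //; apply: leqW.
  have yr1 : y r < 1 by rewrite yr -(yptn n y); apply: ypt_lt.
  have neg : forall j, (1 <= j <= n)%N -> j != r -> a j r <= 0.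
    move=> j /andP[j1 jn] jr.
    have /andP[_ hl] := Hmu j r jn rr.
    have /andP[hh _] := Hmu j.-1 r (leq_trans (leq_pred j) jn) rr.
    rewrite /a subr_le0.
    apply: (le_trans hl); apply: (le_trans _ hh).
    have [tl1 _ _] := Ht j jn.
    have [_ th1 _] := Ht j.-1 (leq_trans (leq_pred j) jn).
    have [_ tlj] := rint_lo tl1.
    have [_ thj] := rint_hi (leq_trans (leq_pred j) jn) th1.
    have jS : j.-1.+1 = j by rewrite prednK.
    rewrite jS in thj.
    have {}thj := thj jn.
    have {}tlj := tlj j1.
    have [jr'|jr'] := ltnP j r.
      have p1 : -1 < thi j.-1 - y r.
        have [h0 _] := rint_lo th1.
        have : 0 <= ypt n y j.-1 by rewrite -(ypt0 n y); apply: ypt_le => //; rewrite leqW // (leq_trans (leq_pred j) jn).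
        lra.
      have q0 : tlo j - y r < 0.
        have [_ h0] := rint_hi jn tl1.
        have := h0 (leq_trans jr' rn).
        have : ypt n y j.+1 <= ypt n y r by apply: ypt_le => //; apply: leqW.
        lra.
      apply: (leftD_mono cfn) => //; lra.
    have jr2 : (r < j)%N by rewrite ltn_neqAle eq_sym jr jr'.
    have p0 : 0 < thi j.-1 - y r.
      have [_ h0] := rint_lo th1.
      have := h0 (ltac:(lia)).
      have : ypt n y r <= ypt n y j.-1 by apply: ypt_le => //; lia.
      lra.
    have q1 : tlo j - y r < 1.
      have [h0 _] := rint_hi jn tl1.
      have : ypt n y j.+1 <= ypt n y n.+1 by apply: ypt_le => //; lia.
      rewrite yptn; lra.
    apply: (leftD_mono cfp) => //; lra.
  have n1 : (0 < n)%N by lia.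
  have cB : c <= mu n r - mu 0 r.
    have /andP[hn _] := Hmu n r (leqnn n) rr.
    have /andP[_ h0] := Hmu 0 r (leq0n n) rr.
    have [tl0 _ _] := Ht 0 (leq0n n).
    have [_ thn _] := Ht n (leqnn n).
    have [_ a1] := rint_lo thn.
    have := a1 n1.
    have [a2 _] := rint_hi (leqnn n) thn.
    rewrite yptn in a2.
    have [a3 _] := rint_lo tl0.
    have [_ a4] := rint_hi (leq0n n) tl0.
    have := a4 n1.
    rewrite ypt0 in a3.
    have : ypt n y r <= ypt n y n by apply: ypt_le => //; lia.
    have : ypt n y 1 <= ypt n y r by apply: ypt_le => //; lia.
    move=> b1 b2 b3 b4.
    have := keyD cfn cfp pm (t := thi n - y r) (u := tlo 0 - y r).
    rewrite -yr in b1 b2.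
    move=> /(_ _ _ _ _ _); lra.
  have tel : \sum_(1 <= j < n.+1) a j r = mu n r - mu 0 r.
    by apply: (@telescope_sumr_eq _ 1 n.+1 (fun k => mu k.-1 r)).
  have spl : \sum_(1 <= j < n.+1) a j r = a r r + \sum_(1 <= j < n.+1 | j != r) a j r.
    by rewrite (bigD1_seq r) ?mem_index_iota ?iota_uniq //; lia.
  have abs : \sum_(1 <= j < n.+1 | j != r) `|a j r| = - \sum_(1 <= j < n.+1 | j != r) a j r.
    rewrite -sumrN big_nat_cond [RHS]big_nat_cond; apply: eq_bigr => j /andP[/andP[j1 jn] jr].
    by rewrite ler0_norm // neg //; lia.
  rewrite abs; lra.
split; first exact: key.
apply: (diagdom c0) => i.
have := key i.+1 (ltac:(apply/andP; split => //; exact: ltn_ord i)).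
suff -> : \sum_(j | j != i) `|(\matrix_(j0 < n, r < n) a j0.+1 r.+1) j i| =
    \sum_(1 <= j < n.+1 | j != i.+1) `|a j i.+1| by rewrite mxE.
rewrite big_add1 /= big_mkord; apply: eq_big => [j|j _]; first by [].
by rewrite mxE.
Qed.
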